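(* Let $v$ be a real random variable with $\Pr[v\in[v^{\min},v^{\max}]]=1$, where $0\le v^{\min}<v^{\max}$, and let $c\ge 0$. There exists a cdf $G\in\mathcal{G}$ such that Mechanism 1 with $G$ is truthful, i.e. $U_{\text{coop}}(G)-U_{\text{heur}}(G)>c$, if and only if $$c<E\big[\max(0,\,v-E[v])\big].$$ Moreover, whenever this inequality holds, the cdf $G^*$ of the point mass at $E[v]$ (i.e. $G^*(r)=0$ for $r<E[v]$ and $G^*(r)=1$ for $r\ge E[v]$) makes Mechanism 1 truthful. Equivalently, $\sup_{G\in\mathcal{G}}\big(U_{\text{coop}}(G)-U_{\text{heur}}(G)\big)=E[\max(0,v-E[v])]$, and this supremum is attained by $G^*$.
   Context: Setting: A principal owns an object whose (common) monetary value $v$ is unknown; $v$ has a prior distribution supported in $[v^{\min},v^{\max}]$ with $0\le v^{\min}<v^{\max}$, and $E[\cdot]$ denotes expectation with respect to this prior. A single agent, risk-neutral with quasi-linear utility, values the object at $v$ as well; initially he knows only the prior, but he can learn $v$ exactly by incurring a cost $c\ge0$. Let $\mathcal{G}$ be the set of cumulative distribution functions of probability measures on $[v^{\min},v^{\max}]$; for $G\in\mathcal{G}$ write $dG$ for the associated measure and $\widehat G(x)=\int_{v^{\min}}^{x}G(r)\,dr$. Mechanism 1 (parameters $\epsilon>0$ and $G\in\mathcal{G}$): (1) the principal secretly draws $r$: with probability $\epsilon$ uniformly on $[v^{\min},v^{\max}]$, with probability $1-\epsilon$ according to $G$; (2) the agent bids a real number $b$; (3) $r$ is revealed; if $b\ge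 r$ the agent gets the object and pays $r$ (agent's utility $v-r$), otherwise nothing happens (utility $0$). In the limit $\epsilon\to0$, define the agent's optimal expected utility when he computes $v$ (cooperative strategy, excluding the cost $c$) as $U_{\text{coop}}(G)=E\big[\sup_{b}\int_{[v^{\min},b]}(v-r)\,dG(r)\big]$, and when he does not compute $v$ (heuristic strategy, bidding based on the prior only) as $U_{\text{heur}}(G)=\sup_{b}\int_{[v^{\min},b]}(E[v]-r)\,dG(r)$. Mechanism 1 with $G$ is called truthful if $U_{\text{coop}}(G)-U_{\text{heur}}(G)>c$. *)

(* Defs.v *)
From Stdlib Require Import Reals Lra Classical ClassicalEpsilon.
Open Scope R_scope.

Definition Rsup (P : R -> Prop) : R :=
  match excluded_middle_informative (exists l, is_lub P l) with
  | left H => proj1_sig (constructive_indefinite_description _ H)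
  | right _ => 0
  end.

Definition RInt (f : R -> R) (a b : R) : R :=
  match excluded_middle_informative (inhabited (Riemann_integrable f a b)) with
  | left H => RiemannInt (epsilon H (fun _ => True))
  | right _ => 0
  end.

(* The prior of v, supported in [vmin,vmax], given by its expectation operator
   on continuous functions (a positive normalized linear functional; by the
   Riesz representation theorem these are exactly the Borel probability
   measures on [vmin,vmax]). *)
Definition is_expectation (vmin vmax : R) (E : (R -> R) -> R) : Prop :=
  (forall f g, continuity f -> continuity g ->
      E (fun x => f x + g x) = E f + E g) /\
  (forall (a : R) f, continuity f -> E (fun x => a * f x) = a * E f) /\
  (forall f g, continuity f -> continuity g ->
      (forall x, vmin <= x <= vmax -> f x <= g x) -> E f <= E g) /\
  E (fun _ => 1) = 1.

Definition is_cdf (vmin vmax : R) (G : R -> R) : Prop :=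
  (forall x y, x <= y -> G x <= G y) /\
  (forall x eps, eps > 0 -> exists d, d > 0 /\
      forall y, x <= y < x + d -> Rabs (G y - G x) < eps) /\
  (forall x, x < vmin -> G x = 0) /\
  (forall x, vmax <= x -> G x = 1).

Definition Ghat (vmin : R) (G : R -> R) (x : R) : R := RInt G vmin x.

(* int_{[vmin,b]} (x - r) dG(r)  (Lebesgue-Stieltjes, G(vmin-) = 0),
   written via integration by parts as (x-b) G(b) + Ghat(b). *)
Definition partial_util (vmin : R) (G : R -> R) (x b : R) : R :=
  if Rlt_dec b vmin then 0 else (x - b) * G b + Ghat vmin G b.

Definition best_util (vmin : R) (G : R -> R) (x : R) : R :=
  Rsup (fun y => exists b, y = partial_util vmin G x b).

Definition U_coop (vmin : R) (E : (R -> R) -> R) (G : R -> R) : R :=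
  E (fun v => best_util vmin G v).

Definition U_heur (vmin : R) (E : (R -> R) -> R) (G : R -> R) : R :=
  best_util vmin G (E (fun v => v)).

Definition truthful (vmin : R) (E : (R -> R) -> R) (c : R) (G : R -> R) : Prop :=
  U_coop vmin E G - U_heur vmin E G > c.

Definition Gstar (m : R) (r : R) : R := if Rlt_dec r m then 0 else 1.

(* Main.v *)
Require Import Defs.
From Stdlib Require Import Reals Lra Classical ClassicalEpsilon FunctionalExtensionality.
From Coquelicot Require Import Coquelicot.
Open Scope R_scope.

Lemma lip_cont (f : R -> R) :
  (forall x y, Rabs (f x - f y) <= Rabs (x - y)) -> continuity f.
Proof.
  intros H x. unfold continuity_pt, continue_in, limit1_in, limit_in.
  intros eps Heps. exists eps. split; [lra|]. intros y [_ Hy].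
  simpl in *. unfold R_dist in *. eapply Rle_lt_trans; [apply H| exact Hy].
Qed.

Lemma cont_const (k : R) : continuity (fun _ => k).
Proof. apply lip_cont; intros. unfold Rminus; rewrite Rplus_opp_r, Rabs_R0; apply Rabs_pos. Qed.

Lemma cont_id : continuity (fun v => v).
Proof. apply lip_cont; intros; lra. Qed.

Lemma abs_facts (a : R) : a <= Rabs a /\ - a <= Rabs a.
Proof. split; [apply Rle_abs|]. rewrite <- Rabs_Ropp. apply Rle_abs. Qed.

Lemma cont_rmax (m : R) : continuity (fun v => Rmax 0 (v - m)).
Proof.
  apply lip_cont; intros x y. destruct (abs_facts (x - y)).
  apply Rabs_le. unfold Rmax; destruct (Rle_dec 0 (x - m)), (Rle_dec 0 (y - m)); lra.
Qed.

Lemma Rsup_lub (P : R -> Prop) l : is_lub P l -> Rsup P = l.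
Proof.
  intros H. unfold Rsup. destruct excluded_middle_informative as [H'|H'].
  - destruct constructive_indefinite_description as [l' Hl']; simpl. eapply is_lub_u; eauto.
  - exfalso; apply H'; eauto.
Qed.

Lemma Rsup_none (P : R -> Prop) : ~ (exists l, is_lub P l) -> Rsup P = 0.
Proof.
  intros H. unfold Rsup. destruct excluded_middle_informative as [H'|H']; tauto.
Qed.

Definition PP vmin G x := fun y => exists b, y = partial_util vmin G x b.

Lemma G01 vmin vmax G : vmin < vmax -> is_cdf vmin vmax G -> forall b, 0 <= G b <= 1.
Proof.
  intros hv [Hm [_ [H0 H1]]] b. split.
  - destruct (Rlt_dec b vmin). rewrite H0; lra.
    rewrite <- (H0 (vmin - 1)) by lra. apply Hm; lra.
  - destruct (Rle_dec vmax b). rewrite H1; lra.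
    rewrite <- (H1 vmax) by lra. apply Hm; lra.
Qed.

Lemma p_lip vmin G : (forall b, 0 <= G b <= 1) ->
  forall x x' b, partial_util vmin G x' b <= partial_util vmin G x b + Rabs (x' - x).
Proof.
  intros HG x x' b. unfold partial_util. destruct (Rlt_dec b vmin).
  - pose proof (Rabs_pos (x' - x)); lra.
  - destruct (abs_facts (x' - x)). specialize (HG b).
    assert ((x' - x) * G b <= Rabs (x' - x)).
    { destruct (Rle_dec 0 (x' - x)); nra. }
    nra.
Qed.

Lemma p_mono vmin G : (forall b, 0 <= G b <= 1) ->
  forall x x' b, x <= x' -> partial_util vmin G x b <= partial_util vmin G x' b.
Proof.
  intros HG x x' b Hx. unfold partial_util. destruct (Rlt_dec b vmin). lra.
  specialize (HG b). nra.
Qed.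

Lemma bound_transfer vmin G : (forall b, 0 <= G b <= 1) ->
  forall x x', bound (PP vmin G x) -> bound (PP vmin G x').
Proof.
  intros HG x x' [M HM]. exists (M + Rabs (x' - x)). intros y [b ->].
  eapply Rle_trans; [apply (p_lip vmin G HG x)|].
  apply Rplus_le_compat_r. apply HM. exists b; reflexivity.
Qed.

Lemma lub_ex vmin G x : bound (PP vmin G x) -> exists l, is_lub (PP vmin G x) l.
Proof.
  intros Hb. destruct (completeness (PP vmin G x) Hb) as [l Hl].
  - exists (partial_util vmin G x 0). exists 0; reflexivity.
  - eauto.
Qed.

Lemma no_lub P : ~ bound P -> ~ (exists l, is_lub P l).
Proof. intros H [l [Hl _]]. apply H. exists l; exact Hl. Qed.

Lemma bu_gen vmin G : (forall b, 0 <= G b <= 1) ->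
  forall x x',
  (best_util vmin G x' <= best_util vmin G x + Rabs (x' - x)) /\
  (x <= x' -> best_util vmin G x <= best_util vmin G x').
Proof.
  intros HG x x'. unfold best_util.
  change (fun y => exists b, y = partial_util vmin G x b) with (PP vmin G x).
  change (fun y => exists b, y = partial_util vmin G x' b) with (PP vmin G x').
  destruct (classic (bound (PP vmin G x))) as [Hb|Hb].
  - destruct (lub_ex _ _ _ Hb) as [l Hl].
    destruct (lub_ex _ _ _ (bound_transfer vmin G HG x x' Hb)) as [l' Hl'].
    rewrite (Rsup_lub _ _ Hl), (Rsup_lub _ _ Hl'). split.
    + apply (proj2 Hl'). intros y [b ->].
      eapply Rle_trans; [apply (p_lip vmin G HG x)|].
      apply Rplus_le_compat_r. apply (proj1 Hl). exists b; reflexivity.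
    + intros Hx. apply (proj2 Hl). intros y [b ->].
      eapply Rle_trans; [apply (p_mono vmin G HG x x' b Hx)|].
      apply (proj1 Hl'). exists b; reflexivity.
  - assert (Hb' : ~ bound (PP vmin G x')).
    { intros Hb'. apply Hb. exact (bound_transfer vmin G HG x' x Hb'). }
    rewrite (Rsup_none _ (no_lub _ Hb)), (Rsup_none _ (no_lub _ Hb')).
    pose proof (Rabs_pos (x' - x)). split; lra.
Qed.

Lemma Econst vmin vmax E : is_expectation vmin vmax E -> forall k, E (fun _ => k) = k.
Proof.
  intros [Hadd [Hscal [Hmon H1]]] k.
  replace (fun _ : R => k) with (fun x : R => k * (fun _ => 1) x)
    by (apply functional_extensionality; intros; simpl; ring).
  rewrite Hscal by apply cont_const. rewrite H1; ring.
Qed.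

Lemma diff_le vmin vmax E G : vmin < vmax -> is_expectation vmin vmax E ->
  is_cdf vmin vmax G ->
  U_coop vmin E G - U_heur vmin E G <= E (fun v => Rmax 0 (v - E (fun v => v))).
Proof.
  intros hv hE HG. pose proof (G01 _ _ _ hv HG) as H01.
  pose proof (bu_gen vmin G H01) as Hb.
  pose proof (Econst _ _ _ hE) as Ec.
  destruct hE as [Hadd [Hscal [Hmon H1]]].
  unfold U_coop, U_heur. set (m := E (fun v => v)). set (k := best_util vmin G m).
  assert (Hc : continuity (fun v => best_util vmin G v)).
  { apply lip_cont. intros x y. destruct (Hb y x) as [A _]. destruct (Hb x y) as [B _].
    rewrite (Rabs_minus_sym y x) in B. apply Rabs_le; lra. }
  assert (HA := Hadd (fun _ => k) (fun v => Rmax 0 (v - m)) (cont_const k) (cont_rmax m)).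
  simpl in HA. rewrite Ec in HA.
  assert (HM := Hmon (fun v => best_util vmin G v) (fun v => k + Rmax 0 (v - m)) Hc).
  assert (continuity (fun v => k + Rmax 0 (v - m))).
  { apply (continuity_plus (fun _ => k) (fun v => Rmax 0 (v - m))).
    apply cont_const. apply cont_rmax. }
  specialize (HM H).
  cut (E (fun v => best_util vmin G v) <= E (fun v => k + Rmax 0 (v - m))). lra.
  apply HM. intros x _. destruct (Rle_dec x m).
  - destruct (Hb x m) as [_ B]. specialize (B r). pose proof (Rmax_l 0 (x - m)). unfold k; lra.
  - destruct (Hb m x) as [A _]. rewrite Rabs_right in A by lra.
    pose proof (Rmax_r 0 (x - m)). unfold k; lra.
Qed.

Lemma Defs_RInt f a b (pr : Riemann_integrable f a b) : Defs.RInt f a b = RiemannInt pr.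
Proof.
  unfold Defs.RInt. destruct excluded_middle_informative as [H|H].
  - apply RiemannInt_P5.
  - exfalso; apply H; constructor; exact pr.
Qed.

Lemma Defs_RInt_is f a b l : is_RInt f a b l -> Defs.RInt f a b = l.
Proof.
  intros H. assert (Hex : ex_RInt f a b) by (exists l; exact H).
  rewrite (Defs_RInt f a b (ex_RInt_Reals_0 _ _ _ Hex)), <- RInt_Reals.
  apply is_RInt_unique; exact H.
Qed.

Lemma Ghat_star vmin m b : vmin <= m -> vmin <= b ->
  Ghat vmin (Gstar m) b = Rmax 0 (b - m).
Proof.
  intros Hm Hb. unfold Ghat. destruct (Rlt_dec b m).
  - rewrite Rmax_left by lra.
    assert (H := is_RInt_const vmin b 0).
    assert (H' : is_RInt (Gstar m) vmin b (scal (b - vmin) (0:R))).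
    { apply (is_RInt_ext (fun _ => 0)); [|exact H].
      intros x. rewrite Rmin_left, Rmax_right by lra. intros Hx.
      unfold Gstar; destruct (Rlt_dec x m); lra. }
    rewrite (Defs_RInt_is _ _ _ _ H').
    unfold scal; simpl; unfold mult; simpl; unfold Hierarchy.mult; simpl; ring.
  - rewrite Rmax_right by lra. apply Defs_RInt_is.
    assert (H1 := is_RInt_const vmin m 0).
    assert (H2 := is_RInt_const m b 1).
    assert (H1' : is_RInt (Gstar m) vmin m (scal (m - vmin) (0:R))).
    { apply (is_RInt_ext (fun _ => 0)); [|exact H1].
      intros x. rewrite Rmin_left, Rmax_right by lra. intros Hx.
      unfold Gstar; destruct (Rlt_dec x m); lra. }
    assert (H2' : is_RInt (Gstar m) m b (scal (b - m) (1:R))).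
    { apply (is_RInt_ext (fun _ => 1)); [|exact H2].
      intros x. rewrite Rmin_left, Rmax_right by lra. intros Hx.
      unfold Gstar; destruct (Rlt_dec x m); lra. }
    assert (H := is_RInt_Chasles _ _ _ _ _ _ H1' H2').
    replace (b - m) with (plus (scal (m - vmin) (0:R)) (scal (b - m) (1:R))).
    exact H.
    unfold plus, scal; simpl; unfold mult; simpl; unfold Hierarchy.mult; simpl; ring.
Qed.

Lemma bu_star vmin m x : vmin <= m -> best_util vmin (Gstar m) x = Rmax 0 (x - m).
Proof.
  intros Hm. unfold best_util. apply Rsup_lub. split.
  - intros y [b ->]. unfold partial_util. destruct (Rlt_dec b vmin).
    + apply Rmax_l.
    + rewrite Ghat_star by lra. unfold Gstar. destruct (Rlt_dec b m).
      * rewrite Rmax_left by lra. pose proof (Rmax_l 0 (x - m)). lra.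
      * rewrite Rmax_right by lra. pose proof (Rmax_r 0 (x - m)). lra.
  - intros M HM. apply Rmax_lub.
    + apply HM. exists (vmin - 1). unfold partial_util.
      destruct (Rlt_dec (vmin - 1) vmin); [reflexivity|lra].
    + apply Rle_trans with (partial_util vmin (Gstar m) x m).
      * unfold partial_util. destruct (Rlt_dec m vmin); [lra|].
        rewrite Ghat_star by lra. rewrite Rmax_left by lra.
        unfold Gstar. destruct (Rlt_dec m m); lra.
      * apply HM. exists m; reflexivity.
Qed.

Lemma cdf_star vmin vmax m : vmin <= m <= vmax -> is_cdf vmin vmax (Gstar m).
Proof.
  intros Hm. split; [|split; [|split]].
  - intros x y Hxy. unfold Gstar. destruct (Rlt_dec x m), (Rlt_dec y m); lra.
  - intros x eps Heps. destruct (Rlt_dec x m).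
    + exists (m - x). split; [lra|]. intros y Hy.
      assert (Eq : Gstar m y = Gstar m x)
        by (unfold Gstar; destruct (Rlt_dec y m), (Rlt_dec x m); lra).
      rewrite (Rminus_diag_eq _ _ Eq), Rabs_R0; lra.
    + exists 1. split; [lra|]. intros y Hy.
      assert (Eq : Gstar m y = Gstar m x)
        by (unfold Gstar; destruct (Rlt_dec y m), (Rlt_dec x m); lra).
      rewrite (Rminus_diag_eq _ _ Eq), Rabs_R0; lra.
  - intros x Hx. unfold Gstar. destruct (Rlt_dec x m); lra.
  - intros x Hx. unfold Gstar. destruct (Rlt_dec x m); lra.
Qed.

Theorem theorem1 (vmin vmax c : R) (E : (R -> R) -> R)
  (hv : 0 <= vmin < vmax) (hE : is_expectation vmin vmax E) (hc : 0 <= c) :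
  let Ev := E (fun v => v) in
  let bound := E (fun v => Rmax 0 (v - Ev)) in
  ((exists G, is_cdf vmin vmax G /\ truthful vmin E c G) <-> c < bound) /\
  (c < bound -> truthful vmin E c (Gstar Ev)) /\
  is_cdf vmin vmax (Gstar Ev) /\
  U_coop vmin E (Gstar Ev) - U_heur vmin E (Gstar Ev) = bound /\
  (forall G, is_cdf vmin vmax G -> U_coop vmin E G - U_heur vmin E G <= bound).
Proof.
  intros Ev bnd.
  pose proof (Econst _ _ _ hE) as Ec.
  assert (Hm : vmin <= Ev <= vmax).
  { destruct hE as [_ [_ [Hmon _]]]. split.
    - rewrite <- (Ec vmin). unfold Ev. apply Hmon; [apply cont_const|apply cont_id|].
      intros; lra.
    - rewrite <- (Ec vmax). unfold Ev. apply Hmon; [apply cont_id|apply cont_const|].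
      intros; lra. }
  assert (Hup : forall G, is_cdf vmin vmax G -> U_coop vmin E G - U_heur vmin E G <= bnd).
  { intros G HG. apply diff_le with vmax; [lra|exact hE|exact HG]. }
  assert (Hst : U_coop vmin E (Gstar Ev) - U_heur vmin E (Gstar Ev) = bnd).
  { unfold U_coop, U_heur. fold Ev. rewrite bu_star by lra.
    replace (fun v => best_util vmin (Gstar Ev) v) with (fun v => Rmax 0 (v - Ev)).
    2:{ apply functional_extensionality; intros; symmetry; apply bu_star; lra. }
    rewrite Rmax_left by lra. unfold bnd; ring. }
  assert (Hcdf := cdf_star vmin vmax Ev Hm).
  split; [|split; [|split; [|split]]]; auto.
  - split.
    + intros [G [HG Ht]]. unfold truthful in Ht. specialize (Hup G HG). lra.
    + intros Hlt. exists (Gstar Ev). split; auto. unfold truthful. lra.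
  - intros Hlt. unfold truthful. lra.
Qed.
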